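(* Let $A^\star\in\mathbb{R}^{n\times n}$, $B^\star\in\mathbb{R}^{n\times m}$, $C^\star\in\mathbb{R}^{p\times n}$ with $(A^\star,C^\star)$ observable with observability index $\ell^\star$, let data be generated as in the context and assume $\Delta_{10}\Delta_{10}^\top\preceq\Theta$. Then: $\Psi_0\Psi_0^\top\succ\Theta_{22}$ implies $\operatorname{rank}S_0=(p+m)\ell^\star$; $\operatorname{rank}S_0=(p+m)\ell^\star$ implies $\operatorname{rank}\mathcal{O}_{\ell^\star}=p\ell^\star$; and $\operatorname{rank}\mathcal{O}_{\ell^\star}=p\ell^\star$ implies $p\ell^\star=n$.
   Context: Let $\ell=\ell^\star$; $\mathcal{O}_\ell=[C^\star;C^\star A^\star;\dots;C^\star{A^\star}^{\ell-1}]\in\mathbb{R}^{p\ell\times n}$. Data: for $k=0,\dots,T$ ($T\ge\ell$), $x(k+1)=A^\star x(k)+B^\star u(k)$, $y(k)=C^\star x(k)$ from some $x(0)$; $u^{\mathrm m}=u+d^u$, $y^{\mathrm m}=y+d^y$. Matrices with columns $j=0,\dots,T-\ell$: column $j$ of $\Psi_0$ is $(y^{\mathrm m}(j),\dots,y^{\mathrm m}(j+\ell-1),u^{\mathrm m}(j),\dots,u^{\mathrm m}(j+\ell-1))$; of $S_0$ is $(y(j),\dots,y(j+\ell-1),u(j),\dots,u(j+\ell-1))$ (noise-free data); of $\Delta_{10}$ is $(d^y(j+\ell),d^y(j),\dots,d^y(j+\ell-1),d^u(j),\dots,d^u(j+\ell-1))$. $\Theta=\Theta^\top\succeq0$ of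 size $p+p\ell+m\ell$ is given, partitioned as $\begin{bmatrix}\Theta_{11}&\Theta_{12}\\\Theta_{12}^\top&\Theta_{22}\end{bmatrix}$ with $\Theta_{11}\in\mathbb{R}^{p\times p}$. *)

(* Defs.v *)
From HB Require Import structures.
From mathcomp Require Import all_boot all_order all_algebra.
Set Implicit Arguments. Unset Strict Implicit. Unset Printing Implicit Defensive.
Import Order.TTheory GRing.Theory Num.Theory.
Local Open Scope ring_scope.

(* Positive semidefiniteness / definiteness of a square real matrix via the
   quadratic form (the paper uses these for symmetric matrices). *)
Definition psdmx (R : realFieldType) (k : nat) (M : 'M[R]_k) : Prop :=
  forall v : 'cV[R]_k, 0 <= (v^T *m M *m v) 0 0.
Definition pdmx (R : realFieldType) (k : nat) (M : 'M[R]_k) : Prop :=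
  forall v : 'cV[R]_k, v != 0 -> 0 < (v^T *m M *m v) 0 0.
Definition loewner_le (R : realFieldType) (k : nat) (X Y : 'M[R]_k) : Prop :=
  psdmx (Y - X).
Definition loewner_gt (R : realFieldType) (k : nat) (X Y : 'M[R]_k) : Prop :=
  pdmx (X - Y).

Definition obsmx (R : realFieldType) (n p : nat) (A : 'M[R]_n) (C : 'M[R]_(p, n))
  (l : nat) : 'M[R]_(\sum_(i < l) p, n) :=
  @mxcol R l (fun _ => p) n (fun i => C *m A ^+ i).

Definition observable (R : realFieldType) (n p : nat) (A : 'M[R]_n) (C : 'M[R]_(p, n)) :=
  \rank (obsmx A C n) = n.

Definition obs_index (R : realFieldType) (n p : nat) (A : 'M[R]_n) (C : 'M[R]_(p, n))
  (l : nat) :=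
  \rank (obsmx A C l) = n /\ (forall k, (k < l)%N -> (\rank (obsmx A C k) < n)%N).

Definition hankel (R : realFieldType) (d : nat) (w : nat -> 'cV[R]_d) (l N : nat)
  : 'M[R]_(\sum_(k < l) d, N) :=
  @mxcol R l (fun _ => d) N (fun k => \matrix_(r < d, j < N) w (j + k)%N r 0).

(* Main.v *)
Require Import Defs.
From HB Require Import structures.
From mathcomp Require Import all_boot all_order all_algebra.
From mathcomp Require Import zify ring lra.
Import Order.TTheory GRing.Theory Num.Theory.
Local Open Scope ring_scope.
Set Implicit Arguments.

Lemma sub_mxcol_blk {R : fieldType} (k : nat) (p_ : 'I_k -> nat) (c : nat)
  (B_ : forall i, 'M[R]_(p_ i, c)) i : (B_ i <= mxcol B_)%MS.
Proof.
rewrite -[X in (X <= _)%MS](mxcolK B_ i) /submxcol rowsubE.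
exact: submxMl.
Qed.

Lemma mxcol_sub_all {R : fieldType} (k : nat) (p_ : 'I_k -> nat) (c r : nat)
  (B_ : forall i, 'M[R]_(p_ i, c)) (S : 'M[R]_(r, c)) :
  (forall i, (B_ i <= S)%MS) -> (mxcol B_ <= S)%MS.
Proof.
move=> H; apply/row_subP => i; rewrite row_mxcol.
exact: submx_trans (row_sub _ _) (H _).
Qed.

Lemma sub_col_mxl {R : fieldType} a b c (X : 'M[R]_(a, c)) (Y : 'M[R]_(b, c)) :
  (X <= col_mx X Y)%MS.
Proof. by have := submx_refl (col_mx X Y); rewrite col_mx_sub => /andP[]. Qed.

Lemma sub_col_mxr {R : fieldType} a b c (X : 'M[R]_(a, c)) (Y : 'M[R]_(b, c)) :
  (Y <= col_mx X Y)%MS.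
Proof. by have := submx_refl (col_mx X Y); rewrite col_mx_sub => /andP[]. Qed.

Lemma hankelD {R : realFieldType} (d : nat) (w w' : nat -> 'cV[R]_d) (l N : nat) :
  hankel (fun k => w k + w' k) l N = hankel w l N + hankel w' l N.
Proof.
rewrite /hankel -mxcolD; apply: eq_mxcol => k; apply/matrixP => r j.
by rewrite !mxE.
Qed.

Lemma quad_dr {R : realFieldType} a b (M : 'M[R]_(a + b)) (w : 'rV[R]_b) :
  row_mx 0 w *m M *m (row_mx 0 w)^T = w *m drsubmx M *m w^T.
Proof.
by rewrite -[M in LHS]submxK tr_row_mx trmx0 mul_row_block !mul0mx !add0r mul_row_col mulmx0 add0r.
Qed.

Unset Implicit Arguments.

Theorem lemma9 (R : realFieldType) (n m p : nat)
  (A : 'M[R]_n) (B : 'M[R]_(n, m)) (C : 'M[R]_(p, n))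
  (l : nat) (T : nat)
  (x : nat -> 'cV[R]_n) (u du : nat -> 'cV[R]_m) (y dy : nat -> 'cV[R]_p)
  (Theta : 'M[R]_(p + (\sum_(k < l) p + \sum_(k < l) m)))
  (Hobs : observable A C)
  (Hl : obs_index A C l)
  (HlT : (l <= T)%N)
  (Hx : forall k, (k <= T)%N -> x k.+1 = A *m x k + B *m u k)
  (Hy : forall k, (k <= T)%N -> y k = C *m x k)
  (HThsym : Theta^T = Theta)
  (HThpsd : psdmx Theta) :
  let N := (T - l).+1 in
  let Psi0 := col_mx (hankel (fun k => y k + dy k) l N)
                     (hankel (fun k => u k + du k) l N) in
  let S0 := col_mx (hankel y l N) (hankel u l N) in
  let Delta10 := col_mx (\matrix_(r < p, j < N) dy (j + l)%N r 0)
                        (col_mx (hankel dy l N) (hankel du l N)) in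
  let Theta22 := drsubmx (Theta : 'M_(p + _, p + _)) in
  loewner_le (Delta10 *m Delta10^T) Theta ->
  (loewner_gt (Psi0 *m Psi0^T) Theta22 -> \rank S0 = ((p + m) * l)%N) /\
  (\rank S0 = ((p + m) * l)%N -> \rank (obsmx A C l) = (p * l)%N) /\
  (\rank (obsmx A C l) = (p * l)%N -> (p * l)%N = n).
Proof.
move=> N Psi0 S0 Delta10 Theta22 Hle.
have Hrows : (\sum_(k < l) p + \sum_(k < l) m)%N = ((p + m) * l)%N.
  rewrite !big_const_ord !iter_addn_0; lia.
split; [|split]; last first.
- by move=> <-; case: Hl.
- move=> Hrk.
  pose X k := \matrix_(i < n, j < N) x (j + k)%N i 0.
  pose Uk k := \matrix_(i < m, j < N) u (j + k)%N i 0.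
  pose S := col_mx (X 0%N) (hankel u l N).
  have HU : forall k, (k < l)%N -> (Uk k <= S)%MS.
    move=> k kl; apply: (submx_trans _ (sub_col_mxr (X 0%N) (hankel u l N))).
    exact: (@sub_mxcol_blk _ l (fun=> m) N (fun k0 : 'I_l => \matrix_(r < m, j < N) u (j + k0)%N r 0) (Ordinal kl)).
  have HX : forall k, (k < l)%N -> (X k <= S)%MS.
    elim=> [|k IH] kl; first exact: sub_col_mxl.
    have -> : X k.+1 = A *m X k + B *m Uk k.
      apply/matrixP => i j; rewrite !mxE addnS Hx; last first.
        have := ltn_ord j; rewrite /N; lia.
      rewrite !mxE; congr (_ + _); apply: eq_bigr => r _; rewrite !mxE //.
    rewrite addmx_sub //.
      exact: submx_trans (submxMl _ _) (IH (ltnW kl)).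
    exact: submx_trans (submxMl _ _) (HU _ (ltnW kl)).
  have HS0 : (S0 <= S)%MS.
    rewrite col_mx_sub sub_col_mxr andbT.
    apply: mxcol_sub_all => k.
    have -> : \matrix_(r < p, j < N) y (j + k)%N r 0 = C *m X k.
      apply/matrixP => i j; rewrite !mxE Hy; last first.
        have := ltn_ord j; have := ltn_ord k; rewrite /N; lia.
      rewrite !mxE; apply: eq_bigr => r _; rewrite !mxE //.
    exact: submx_trans (submxMl _ _) (HX _ (ltn_ord k)).
  have := mxrankS HS0; rewrite Hrk => H1.
  have := leq_trans H1 (rank_leq_row S).
  have := rank_leq_row (obsmx A C l).
  case: Hl => -> _.
  rewrite !big_const_ord !iter_addn_0; lia.
- move=> Hgt.
  have rf : row_free S0.
    apply/negPn/negP => nf.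
    have : kermx S0 != 0 by rewrite kermx_eq0.
    case/rowV0Pn => w /sub_kermxP wS0 w0.
    pose D := col_mx (hankel dy l N) (hankel du l N).
    have HP : Psi0 = S0 + D by rewrite /Psi0 /S0 /D !hankelD add_col_mx.
    have Ha : w *m Psi0 = w *m D by rewrite HP mulmxDr wS0 add0r.
    have HD : row_mx 0 w *m Delta10 = w *m D.
      by rewrite /Delta10 mul_row_col mul0mx add0r.
    have v0 : w^T != 0 by rewrite trmx_eq0.
    have E : forall a b (z : 'rV[R]_a) (M : 'M[R]_(a, b)),
        z *m (M *m M^T) *m z^T = (z *m M) *m (z *m M)^T.
      by move=> a b z M; rewrite trmx_mul !mulmxA.
    have := Hgt _ v0; rewrite trmxK mulmxBr mulmxBl mxE [X in _ + X]mxE.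
    rewrite E Ha => H1.
    have := Hle (row_mx 0 w)^T; rewrite trmxK mulmxBr mulmxBl mxE.
    have := Hle (row_mx 0 w)^T; rewrite trmxK mulmxBr mulmxBl mxE [X in _ + X]mxE.
    rewrite quad_dr E HD => H2.
    rewrite /Theta22 in H1.
    move: H1 H2; set a := (w *m D *m (w *m D)^T) 0 0; set b := (w *m drsubmx Theta *m w^T) 0 0 => H1 H2.
    have : (0 < 0 :> R) by lra.
    by rewrite ltxx.
  by move/eqP: rf => ->.
Qed.
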